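(* Let $Y$ be a topological space and $L=\mathcal{O}(Y)$ its Heyting algebra of open sets. Let $\mathfrak{X}=(X,(R_j)_{j\in J})$ be a relational structure of type $\tau$. Then there is an isomorphism of algebras of type $\tau$ (which is moreover a Heyting algebra isomorphism of the underlying lattices) $\Phi:L^{\mathfrak{X}}\to\hat{\mathfrak{X}}^+$ from the convolution algebra of $\mathfrak{X}$ over $L$ to the complex algebra of the constant relational étalé $\hat{\mathfrak{X}}$, where $\Phi(\alpha)$ is the subobject $A$ of $\hat{X}$ (an open subset of $X\times Y$) with cross sections $(\{x\}\times Y)\cap A=\{x\}\times\alpha(x)$ for each $x\in X$.
   Context: A type is a function $\tau:J\to\mathbb{N}$, $j\mapsto n_j$. A relational structure $\mathfrak{X}=(X,(R_j)_J)$ of type $\tau$ is a set $X$ with an $(n_j+1)$-ary relation $R_j\subseteq X^{n_j+1}$ for each $j$. For a complete lattice $L$, the convolution algebra $L^{\mathfrak{X}}=(L^X,(f_j)_J)$ has underlying set all functions $X\to L$ and operations $f_j(\alpha_1,\ldots,\alpha_{n_j})(x)=\bigvee\{\alpha_1(x_1)\wedge\cdots\wedge\alpha_{n_j}(x_{n_j})\mid (x_1,\ldots,x_{n_j},x)\in R_j\}$. An étalé space over $Y$ is a pair $(E,\pi)$ with $\pi:E\to Y$ a local homeomorphism; morphisms are continuous maps commuting with the projections; subobjects of $(E,\pi)$ (equivalence classes of monomorphisms into it) correspond to open subsets of $E$, and $\mathrm{Sub}(E,\pi)$ denotes the set of subobjects. Products of étalé spaces are fibered products over $Y$. The constant étalé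 $\hat{X}$ is $X\times Y$ ($X$ discrete) with projection onto $Y$; $\hat{X}^{k}$ is identified with $X^k\times Y$, and for $R\subseteq X^{k}$, $\hat{R}=R\times Y$ is a subobject of $\hat{X}^k$. The constant relational étalé of $\mathfrak{X}$ is $\hat{\mathfrak{X}}=(\hat{X},(\hat{R}_j)_J)$. For a relational étalé $\mathcal{E}=(E,\pi,(R_j)_J)$ (an étalé space with a subobject $R_j$ of $(E,\pi)^{n_j+1}$ for each $j$), its complex algebra is $\mathcal{E}^+=(\mathrm{Sub}(E,\pi),(g_j)_J)$ with $g_j(A_1,\ldots,A_{n_j})=\pi_{n_j+1}((A_1\times\cdots\times A_{n_j}\times E)\cap R_j)$, the étalé relational image (product taken as étalé product, $\pi_{n_j+1}$ the last projection). For the constant case: $(x,y)\in\hat{R}_j(A_1,\ldots,A_{n_j})$ iff there exist $x_1,\ldots,x_{n_j}$ with $(x_1,\ldots,x_{n_j},x)\in R_j$ and $(x_i,y)\in A_i$ for all $i$. *)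

(* Defs.v *)
From HB Require Import structures.
From mathcomp Require Import all_boot all_order all_algebra.
From mathcomp Require Import all_classical all_reals all_analysis.
Set Implicit Arguments. Unset Strict Implicit. Unset Printing Implicit Defensive.
Local Open Scope classical_set_scope.

(* The Heyting algebra O(T) of open sets of a topological space T:
   meet = intersection, join = union, bottom = set0, top = setT,
   implication a -> b = the largest open U with U /\ a <= b. *)
Definition himp {T : topologicalType} (a b : set T) : set T :=
  \bigcup_(U in [set U : set T | open U /\ U `&` a `<=` b]) U.

(* A relational structure of type tau : J -> nat on a set X:
   R j xs x  means  (xs 0, ..., xs (tau j - 1), x) \in R_j. *)
Definition relstr (J : Type) (tau : J -> nat) (X : Type) :=
  forall j : J, ('I_(tau j) -> X) -> X -> Prop.

(* Operation f_j of the convolution algebra L^X with L = O(Y):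
   f_j(a_1..a_n)(x) = \/ { a_1(x_1) /\ ... /\ a_n(x_n) | (x_1..x_n,x) \in R_j }
   (arbitrary joins in O(Y) are unions, finite meets are intersections). *)
Definition conv_op (J : Type) (tau : J -> nat) (X : Type) (Y : topologicalType)
    (R : relstr tau X) (j : J) (alphas : 'I_(tau j) -> X -> set Y) : X -> set Y :=
  fun x => \bigcup_(xs in [set xs | R j xs x]) \bigcap_(i in [set: 'I_(tau j)]) alphas i (xs i).

(* The constant etale space hat X = X x Y, X discrete, projection onto Y. *)
Definition hatX (X : choiceType) (Y : topologicalType) : topologicalType :=
  (discrete_topology X * Y)%type.

Definition cplx_op (J : Type) (tau : J -> nat) (X : choiceType) (Y : topologicalType)
    (R : relstr tau X) (j : J) (As : 'I_(tau j) -> set (hatX X Y)) : set (hatX X Y) :=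
  [set p | exists xs : 'I_(tau j) -> X,
             R j xs p.1 /\ forall i, As i (xs i, p.2)].

(* Main.v *)
Require Import Defs.
From HB Require Import structures.
From mathcomp Require Import all_boot all_order all_algebra.
From mathcomp Require Import all_classical all_reals all_analysis.
Local Open Scope classical_set_scope.

Lemma slice_open (X : choiceType) (Y : topologicalType) (A : set (hatX X Y)) (x : X) :
  open A -> open [set y | A (x, y)].
Proof.
rewrite !openE => oA y Axy; rewrite /interior.
have := oA (x, y) Axy. rewrite /interior. case => -[P Q] /= [Px Qy] pqA.
apply: filterS Qy => q Qq; apply: pqA; split => //=.
exact: (nbhs_singleton Px).
Qed.

Lemma open_slices (X : choiceType) (Y : topologicalType) (A : set (hatX X Y)) :
  (forall x, open [set y | A (x, y)]) -> open A.
Proof.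
move=> oS; rewrite openE => -[x y] Axy; rewrite /interior.
exists ([set x], [set y' | A (x, y')]) => /=.
  split; first exact: (@discrete_set1 (discrete_topology X)).
  by apply: open_nbhs_nbhs; split => //; exact: oS.
by move=> [a b] [/= -> ?].
Qed.
Theorem theorem3 (J : Type) (tau : J -> nat) (X : choiceType) (Y : topologicalType)
    (R : relstr tau X) :
  exists Phi : (X -> set Y) -> set (hatX X Y),
    (* Phi maps L^X into Sub(hat X) = open subsets of X x Y *)
    (forall alpha : X -> set Y, (forall x, open (alpha x)) -> open (Phi alpha)) /\
    (* cross sections: ({x} x Y) /\ Phi(alpha) = {x} x alpha(x) *)
    (forall alpha : X -> set Y, (forall x, open (alpha x)) ->
       forall x : X, [set p | p.1 = x] `&` Phi alpha = [set p | p.1 = x /\ alpha x p.2]) /\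
    (* bijectivity onto Sub(hat X) *)
    (forall alpha beta : X -> set Y, (forall x, open (alpha x)) -> (forall x, open (beta x)) ->
       Phi alpha = Phi beta -> alpha = beta) /\
    (forall A : set (hatX X Y), open A ->
       exists alpha : X -> set Y, (forall x, open (alpha x)) /\ Phi alpha = A) /\
    (* homomorphism of algebras of type tau *)
    (forall (j : J) (alphas : 'I_(tau j) -> X -> set Y),
       (forall i x, open (alphas i x)) ->
       Phi (conv_op R alphas) = cplx_op R (fun i => Phi (alphas i))) /\
    (* Heyting algebra homomorphism (operations of L^X are pointwise) *)
    Phi (fun _ => set0) = set0 /\
    Phi (fun _ => setT) = setT /\
    (forall alpha beta : X -> set Y, (forall x, open (alpha x)) -> (forall x, open (beta x)) ->
       Phi (fun x => alpha x `&` beta x) = Phi alpha `&` Phi beta /\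
       Phi (fun x => alpha x `|` beta x) = Phi alpha `|` Phi beta /\
       Phi (fun x => himp (alpha x) (beta x)) = himp (Phi alpha) (Phi beta)).
Proof.
exists (fun alpha => [set p : hatX X Y | alpha p.1 p.2]).
split.
  move=> alpha oa; apply: open_slices => x; exact: oa.
split.
  move=> alpha _ x; apply/seteqP; split => [[a b] [/= -> h]|[a b] [/= -> h]] //.
split.
  move=> alpha beta _ _ E; apply/funext => x; apply/funext => y.
  by have := congr1 (fun S => S (x, y)) E.
split.
  move=> A oA; exists (fun x => [set y | A (x, y)]); split.
    by move=> x; exact: slice_open.
  by apply/funext => -[a b].
split.
  move=> j alphas _; apply/funext => -[x y]; apply/propext; rewrite /conv_op /cplx_op /=.
  split.
    by case=> xs /= Rxs H; exists xs; split => // i; exact: (H i).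
  by case=> xs [Rxs H]; exists xs => // i _; exact: H.
split; first by [].
split; first by [].
move=> alpha beta oa ob; split; first by [].
split; first by [].
apply/seteqP; split.
- move=> [x y] /= [U [oU sU] Uy].
  exists [set p : hatX X Y | p.1 = x /\ U p.2]; last by [].
  split.
    apply: open_slices => x'; have [->|nx] := eqVneq x' x.
      by rewrite (_ : [set _ | _] = U) //; apply/funext => z; apply/propext; split => [[]|].
    rewrite (_ : [set _ | _] = set0); first exact: open0.
    by apply/funext => z; apply/propext; split => // -[/eqP]; rewrite (negPf nx).
  by move=> [a b] /= [[-> Ub] ab]; apply: sU.
- move=> [x y] /= [V [oV sV] Vxy].
  exists [set z | V (x, z)]; last by [].
  split; first exact: slice_open.
  by move=> z [Vz az]; exact: (sV (x, z)).
Qed.
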